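(* Let $\star$ be a $t$-definer, let $n\ge1$ and let $(X_1,d_1^\star),\dots,(X_n,d_n^\star)$ be nonempty $\star$-metric spaces, and let $X=\prod_{i=1}^n X_i$. For $x=(x_i)$, $y=(y_i)\in X$ define $d_T^\star(x,y)=d_1^\star(x_1,y_1)\star\cdots\star d_n^\star(x_n,y_n)$ and $d_{\max}^\star(x,y)=\max_{1\le i\le n}d_i^\star(x_i,y_i)$. Then: (1) $(X,d_T^\star)$ is complete if and only if every $(X_i,d_i^\star)$ is complete; (2) $(X,d_{\max}^\star)$ is complete if and only if every $(X_i,d_i^\star)$ is complete.
   Context: A $t$-definer is a function $\star:[0,\infty)\times[0,\infty)\to[0,\infty)$ such that for all $a,b,c\ge 0$: $a\star b=b\star a$; $a\star(b\star c)=(a\star b)\star c$; if $a\le b$ then $a\star c\le b\star c$; $a\star 0=a$; and $\star$ is continuous in its first variable with respect to the Euclidean topology. Given a nonempty set $Y$, a $\star$-metric on $Y$ is a function $\rho:Y\times Y\to[0,\infty)$ such that for all $x,y,z\in Y$: $\rho(x,y)=0$ iff $x=y$; $\rho(x,y)=\rho(y,x)$; and $\rho(x,y)\le \rho(x,z)\star \rho(z,y)$. Both $d_T^\star$ and $d_{\max}^\star$ are $\star$-metrics on $X$. In $(Y,\rho)$, a sequence $\{x_n\}$ is Cauchy if for every $\epsilon>0$ there is $k$ with $\rho(x_n,x_m)<\epsilon$ for all $m,n\ge k$; it converges to $x$ if for every $\epsilon>0$ there is $k$ with $\rho(x,x_n)<\epsilon$ for $n\ge k$; $(Y,\rho)$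 is complete if every Cauchy sequence converges to a point of $Y$. *)

(* Defs.v *)
From Stdlib Require Import Reals.
From mathcomp Require Import all_boot.

Set Implicit Arguments.
Unset Strict Implicit.
Unset Printing Implicit Defensive.

Local Open Scope R_scope.

(* A t-definer: an operation on [0,oo), modelled as R -> R -> R whose
   axioms are required on nonnegative arguments, and which maps
   [0,oo) x [0,oo) into [0,oo). *)
Definition is_tdefiner (star : R -> R -> R) : Prop :=
  (forall a b, 0 <= a -> 0 <= b -> 0 <= star a b) /\
  (forall a b, 0 <= a -> 0 <= b -> star a b = star b a) /\
  (forall a b c, 0 <= a -> 0 <= b -> 0 <= c ->
     star a (star b c) = star (star a b) c) /\
  (forall a b c, 0 <= a -> 0 <= b -> 0 <= c -> a <= b -> star a c <= star b c) /\
  (forall a, 0 <= a -> star a 0 = a) /\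
  (forall c a, 0 <= c -> 0 <= a -> forall eps, 0 < eps ->
     exists delta, 0 < delta /\
       forall a', 0 <= a' -> Rabs (a' - a) < delta ->
         Rabs (star a' c - star a c) < eps).

Definition is_star_metric (star : R -> R -> R) {Y : Type} (rho : Y -> Y -> R)
  : Prop :=
  (forall x y, 0 <= rho x y) /\
  (forall x y, rho x y = 0 <-> x = y) /\
  (forall x y, rho x y = rho y x) /\
  (forall x y z, rho x y <= star (rho x z) (rho z y)).

Definition cauchy_seq {Y : Type} (rho : Y -> Y -> R) (u : nat -> Y) : Prop :=
  forall eps, 0 < eps -> exists k : nat,
    forall m n : nat, (k <= m)%nat -> (k <= n)%nat -> rho (u n) (u m) < eps.

Definition converges_to {Y : Type} (rho : Y -> Y -> R) (u : nat -> Y) (x : Y)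
  : Prop :=
  forall eps, 0 < eps -> exists k : nat,
    forall n : nat, (k <= n)%nat -> rho x (u n) < eps.

Definition complete_space {Y : Type} (rho : Y -> Y -> R) : Prop :=
  forall u : nat -> Y, cauchy_seq rho u -> exists x : Y, converges_to rho u x.

(* d_T(x,y) = d_1(x_1,y_1) * ... * d_n(x_n,y_n), computed as the right fold
   with unit 0 (a * 0 = a). *)
Definition dT (star : R -> R -> R) {n : nat} {X : 'I_n -> Type}
  (d : forall i, X i -> X i -> R) (x y : forall i, X i) : R :=
  \big[star/0]_(i < n) d i (x i) (y i).

Definition dmax {n : nat} {X : 'I_n -> Type}
  (d : forall i, X i -> X i -> R) (x y : forall i, X i) : R :=
  \big[Rmax/0]_(i < n) d i (x i) (y i).

(* Main.v *)
Require Import Defs.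
From Stdlib Require Import Reals.
From mathcomp Require Import all_boot.
From Stdlib Require Import Lra ClassicalEpsilon.

Set Implicit Arguments.
Unset Strict Implicit.

Local Open Scope R_scope.

Definition upd {I : eqType} {X : I -> Type} (a : forall j, X j) (i : I)
  (x : X i) (j : I) : X j :=
  match i =P j with ReflectT e => eq_rect i X x j e | ReflectF _ => a j end.

Lemma upd_eq {I : eqType} {X : I -> Type} (a : forall j, X j) (i : I) (x : X i) :
  upd a x i = x.
Proof.
rewrite /upd; case: (i =P i) => [e|ne]; last by exfalso; apply: ne.
by rewrite (eq_axiomK e).
Qed.

Lemma upd_ne {I : eqType} {X : I -> Type} (a : forall j, X j) (i : I) (x : X i) j :
  j != i -> upd a x j = a j.
Proof.
move=> hne; rewrite /upd; case: (i =P j) => [e|_] //.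
by subst; rewrite eqxx in hne.
Qed.

Section Gen.
Variable op : R -> R -> R.
Hypothesis Hop : is_tdefiner op.

Lemma op_nn a b : 0 <= a -> 0 <= b -> 0 <= op a b.
Proof. by case: Hop => H _; apply: H. Qed.
Lemma op_C a b : 0 <= a -> 0 <= b -> op a b = op b a.
Proof. by case: Hop => _ [H _]; apply: H. Qed.
Lemma op_mono a b c : 0 <= a -> 0 <= b -> 0 <= c -> a <= b -> op a c <= op b c.
Proof. by case: Hop => _ [_ [_ [H _]]]; apply: H. Qed.
Lemma op_0 a : 0 <= a -> op a 0 = a.
Proof. by case: Hop => _ [_ [_ [_ [H _]]]]; apply: H. Qed.
Lemma op_0l a : 0 <= a -> op 0 a = a.
Proof. move=> h; rewrite op_C ?op_0 //; lra. Qed.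
Lemma op_mono_r a b c : 0 <= a -> 0 <= b -> 0 <= c -> b <= c -> op a b <= op a c.
Proof. move=> ha hb hc h; rewrite (op_C ha hb) (op_C ha hc); exact: op_mono. Qed.
Lemma op_ge_l a b : 0 <= a -> 0 <= b -> a <= op a b.
Proof.
move=> ha hb; rewrite -{1}(op_0 ha); apply: op_mono_r => //; lra.
Qed.
Lemma op_ge_r a b : 0 <= a -> 0 <= b -> b <= op a b.
Proof. move=> ha hb; rewrite op_C //; exact: op_ge_l. Qed.

Lemma op_small eps : 0 < eps -> exists del, 0 < del /\
  forall a b, 0 <= a -> a < del -> 0 <= b -> b < del -> op a b < eps.
Proof.
move=> he.
have hc : 0 <= eps / 2 by lra.
case: Hop => _ [_ [_ [_ [_ Hc]]]].
have [del [hd H]] := Hc (eps / 2) 0 hc (Rle_refl 0) (eps / 2) ltac:(lra).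
exists (Rmin del (eps / 2)); split.
  apply: Rmin_glb_lt; lra.
move=> a b ha had hb hbd.
have h1 := Rmin_l del (eps / 2). have h2 := Rmin_r del (eps / 2).
have hab : op a b <= op a (eps / 2) by apply: op_mono_r => //; lra.
have := H a ha ltac:(rewrite Rminus_0_r Rabs_right; lra).
rewrite op_0l // => /Rabs_def2 [h3 h4]; lra.
Qed.

Lemma big_nn {I : Type} (r : seq I) (F : I -> R) :
  (forall j, 0 <= F j) -> 0 <= \big[op/0]_(j <- r) F j.
Proof.
move=> hF; elim: r => [|x r IH]; first by rewrite big_nil; lra.
by rewrite big_cons; apply: op_nn.
Qed.

Lemma big_ge {I : eqType} (r : seq I) (F : I -> R) j :
  (forall j, 0 <= F j) -> j \in r -> F j <= \big[op/0]_(k <- r) F k.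
Proof.
move=> hF; elim: r => [|x r IH] //.
rewrite in_cons big_cons => /orP [/eqP ->|hj].
  apply: op_ge_l => //; exact: big_nn.
apply: Rle_trans (IH hj) _; apply: op_ge_r => //; exact: big_nn.
Qed.

Lemma big_single {I : eqType} (r : seq I) (F : I -> R) i :
  (forall j, 0 <= F j) -> (forall j, j != i -> F j = 0) -> uniq r ->
  \big[op/0]_(k <- r) F k = if i \in r then F i else 0.
Proof.
move=> hF h0; elim: r => [|x r IH]; first by rewrite big_nil.
rewrite big_cons in_cons /= => /andP [hx hu].
rewrite IH //.
case: (eqVneq x i) => [exi|hne] /=.
  by subst x; rewrite (negbTE hx) op_0.
rewrite h0 // op_0l //; case: (i \in r) => //; lra.
Qed.

Lemma big_small {I : Type} (r : seq I) eps : 0 < eps -> exists del, 0 < del /\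
  forall F : I -> R, (forall j, 0 <= F j) -> (forall j, F j < del) ->
  \big[op/0]_(k <- r) F k < eps.
Proof.
elim: r eps => [|x r IH] eps he.
  by exists 1; split; [lra| move=> F _ _; rewrite big_nil].
have [d0 [hd0 H0]] := op_small he.
have [d1 [hd1 H1]] := IH d0 hd0.
exists (Rmin d0 d1); split; first by apply: Rmin_glb_lt.
move=> F hF hlt; rewrite big_cons.
have h1 := Rmin_l d0 d1. have h2 := Rmin_r d0 d1.
apply: H0 => //.
- have := hlt x; lra.
- exact: big_nn.
- apply: H1 => // j; have := hlt j; lra.
Qed.

Lemma gen (n : nat) (X : 'I_n -> Type) (d : forall i : 'I_n, X i -> X i -> R) :
  (forall i, inhabited (X i)) ->
  (forall i x y, 0 <= d i x y) -> (forall i x, d i x x = 0) ->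
  (complete_space (fun x y : forall i, X i => \big[op/0]_(i < n) d i (x i) (y i))
   <-> (forall i, complete_space (d i))).
Proof.
move=> hinh hnn h0; split.
- move=> Hc i u hu.
  have ha : forall j, exists x : X j, True by move=> j; case: (hinh j) => x; exists x.
  pose a := fun j => proj1_sig (constructive_indefinite_description _ (ha j)).
  pose v := fun k => upd a (u k).
  have hD : forall (y : forall j, X j) (m : nat), (forall j, j != i -> y j = a j) ->
      \big[op/0]_(j < n) d j (y j) (v m j) = d i (y i) (u m).
    move=> y m hy.
    rewrite (big_single (i := i)) ?mem_index_enum ?index_enum_uniq //.
      by rewrite /v upd_eq.
    by move=> j hj; rewrite /v upd_ne // hy // h0.
  have [x hx] : exists x, converges_to
      (fun x y : forall i, X i => \big[op/0]_(i < n) d i (x i) (y i)) v x.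
    apply: Hc => eps he.
    have [k hk] := hu eps he.
    exists k => m p hm hp.
    rewrite (hD (v p) m); first by rewrite /v upd_eq; apply: hk.
    by move=> j hj; rewrite /v upd_ne.
  exists (x i) => eps he.
  have [k hk] := hx eps he.
  exists k => m hm.
  apply: Rle_lt_trans (hk m hm).
  have := @big_ge _ (index_enum 'I_n) (fun j => d j (x j) (v m j)) i
    (fun j => hnn _ _ _) (mem_index_enum i).
  by rewrite /v upd_eq.
- move=> Hi u hu.
  have hci : forall i, cauchy_seq (d i) (fun k => u k i).
    move=> i eps he; have [k hk] := hu eps he.
    exists k => m p hm hp; apply: Rle_lt_trans (hk m p hm hp).
    exact: (@big_ge _ (index_enum 'I_n) (fun j => d j (u p j) (u m j)) i
      (fun j => hnn _ _ _) (mem_index_enum i)).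
  pose x := fun i => proj1_sig (constructive_indefinite_description _ (Hi i _ (hci i))).
  have hx : forall i, converges_to (d i) (fun k => u k i) (x i).
    move=> i; exact: proj2_sig (constructive_indefinite_description _ (Hi i _ (hci i))).
  exists x => eps he.
  have [del [hdel H]] := big_small (index_enum 'I_n) he.
  have hk : forall i, exists k : nat, forall m, (k <= m)%N -> d i (x i) (u m i) < del.
    by move=> i; apply: hx.
  pose K := fun i => proj1_sig (constructive_indefinite_description _ (hk i)).
  exists (\max_(i < n) K i) => m hm.
  apply: (H (fun j => d j (x j) (u m j))) => // j.
  apply: (proj2_sig (constructive_indefinite_description _ (hk j))).
  exact: leq_trans (leq_bigmax j) hm.
Qed.

End Gen.

Lemma Rmax_tdefiner : is_tdefiner Rmax.
Proof.
split; [|split; [|split; [|split; [|split]]]].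
- move=> a b ha hb; unfold Rmax; destruct Rle_dec; lra.
- move=> a b _ _; apply: Rmax_comm.
- move=> a b c _ _ _; unfold Rmax; repeat destruct Rle_dec; lra.
- move=> a b c _ _ _ h; unfold Rmax; repeat destruct Rle_dec; lra.
- move=> a ha; unfold Rmax; destruct Rle_dec; lra.
- move=> c a _ _ eps he; exists eps; split => // a' _ /Rabs_def2 [h1 h2].
  apply: Rabs_def1; unfold Rmax; repeat destruct Rle_dec; lra.
Qed.

Theorem theorem4p12 (star : R -> R -> R) (n : nat) (X : 'I_n -> Type)
  (d : forall i : 'I_n, X i -> X i -> R) :
  is_tdefiner star ->
  (0 < n)%N ->
  (forall i, inhabited (X i)) ->
  (forall i, is_star_metric star (d i)) ->
  (complete_space (dT star d) <-> (forall i, complete_space (d i))) /\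
  (complete_space (dmax d) <-> (forall i, complete_space (d i))).
Proof.
move=> Hs _ Hinh Hm.
have hnn : forall i x y, 0 <= d i x y by move=> i; case: (Hm i).
have h0 : forall i x, d i x x = 0 by move=> i x; case: (Hm i) => _ [H _]; apply/H.
split.
- exact: (gen Hs Hinh hnn h0).
- exact: (gen Rmax_tdefiner Hinh hnn h0).
Qed.
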